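(* Let $(F,+,\cdot)$ be a (left) near-field, $I$ an index set, and $\boldsymbol\sigma=(\sigma_i)_{i\in I}$, $\boldsymbol\rho=(\rho_i)_{i\in I}$ families of multiplicative automorphisms of $F$. Let $\boldsymbol{\mathrm{Id}}=(\mathrm{Id})_{i\in I}$ and $\boldsymbol\theta=(\sigma_i\circ\rho_i)_{i\in I}$. Then (1) $F^{\boldsymbol\sigma,\boldsymbol\rho}\simeq F^{\boldsymbol\theta,\boldsymbol{\mathrm{Id}}}$, and (2) $F^{\boldsymbol\sigma,\boldsymbol\rho}\simeq F^{\boldsymbol{\mathrm{Id}},\boldsymbol\theta}$, as near-vector spaces.
   Context: A (left) near-field is $(F,+,\cdot,0,1)$ where $(F,\cdot,1)$ is a monoid, $(F\setminus\{0\},\cdot)$ is a group, $(F,+,0)$ is an abelian group, and $\alpha(\beta+\gamma)=\alpha\beta+\alpha\gamma$. A multiplicative automorphism is a monoid automorphism of $(F,\cdot)$. For $\tau$ multiplicative, $\alpha+_\tau\beta=\tau^{-1}(\tau(\alpha)+\tau(\beta))$. For families $\boldsymbol\sigma=(\sigma_i)_{i\in I}$, $\boldsymbol\rho=(\rho_i)_{i\in I}$ of multiplicative automorphisms, $F^{\boldsymbol\sigma,\boldsymbol\rho}$ is the set of finitely supported $(\alpha_i)_{i\in I}\in F^I$ with addition $(\alpha_i)+_{\boldsymbol\sigma}(\beta_i)=(\alpha_i+_{\sigma_i}\beta_i)$ and scalar multiplication $\alpha\cdot_{\boldsymbol\rho}(\alpha_i)=(\rho_i(\alpha)\alpha_i)$;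 it is a near-vector space over the scalar group $(F,\cdot,1,0,-1)$. An isomorphism of near-vector spaces $V_1\to V_2$ over $F$ is a pair $(\theta,\eta)$ with $\theta$ an additive bijection and $\eta$ a monoid automorphism of $F\setminus\{0\}$ such that $\theta(\alpha u)=\eta(\alpha)\theta(u)$. *)

(* Defs.v *)
From Stdlib Require Import List.
Set Implicit Arguments.

Record NearField := {
  nf_car :> Type;
  nf_add : nf_car -> nf_car -> nf_car;
  nf_opp : nf_car -> nf_car;
  nf_mul : nf_car -> nf_car -> nf_car;
  nf_zero : nf_car;
  nf_one : nf_car;
  nf_addA : forall a b c, nf_add a (nf_add b c) = nf_add (nf_add a b) c;
  nf_addC : forall a b, nf_add a b = nf_add b a;
  nf_add0l : forall a, nf_add nf_zero a = a;
  nf_addNl : forall a, nf_add (nf_opp a) a = nf_zero;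
  nf_mulA : forall a b c, nf_mul a (nf_mul b c) = nf_mul (nf_mul a b) c;
  nf_mul1l : forall a, nf_mul nf_one a = a;
  nf_mul1r : forall a, nf_mul a nf_one = a;
  nf_one_neq0 : nf_one <> nf_zero;
  nf_mul_neq0 : forall a b, a <> nf_zero -> b <> nf_zero -> nf_mul a b <> nf_zero;
  nf_invex : forall a, a <> nf_zero ->
      exists b, b <> nf_zero /\ nf_mul a b = nf_one /\ nf_mul b a = nf_one;
  nf_distl : forall a b c, nf_mul a (nf_add b c) = nf_add (nf_mul a b) (nf_mul a c)
}.

Record MultAut (F : NearField) := {
  ma_fun :> F -> F;
  ma_inv : F -> F;
  ma_mul : forall a b, ma_fun (nf_mul F a b) = nf_mul F (ma_fun a) (ma_fun b);
  ma_one : ma_fun (nf_one F) = nf_one F;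
  ma_invK : forall a, ma_inv (ma_fun a) = a;
  ma_funK : forall a, ma_fun (ma_inv a) = a
}.

Definition ma_id (F : NearField) : MultAut F.
Proof.
  refine {| ma_fun := fun a => a; ma_inv := fun a => a |}; reflexivity.
Defined.

Definition ma_comp (F : NearField) (s r : MultAut F) : MultAut F.
Proof.
  refine {| ma_fun := fun a => s (r a); ma_inv := fun a => ma_inv r (ma_inv s a) |}.
  - intros a b. rewrite (ma_mul r), (ma_mul s). reflexivity.
  - rewrite (ma_one r), (ma_one s). reflexivity.
  - intros a. rewrite (ma_invK s), (ma_invK r). reflexivity.
  - intros a. rewrite (ma_funK r), (ma_funK s). reflexivity.
Defined.

Definition add_tau (F : NearField) (t : MultAut F) (a b : F) : F :=
  ma_inv t (nf_add F (t a) (t b)).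

(* Carrier of F^{sigma,rho}: finitely supported families (alpha_i)_{i in I}. *)
Definition fin_supp (F : NearField) (I : Type) (u : I -> F) : Prop :=
  exists s : list I, forall i, u i <> nf_zero F -> In i s.
Arguments fin_supp {F I} u.

Definition nvs_add (F : NearField) (I : Type) (sig : I -> MultAut F)
  (u v : I -> F) : I -> F := fun i => add_tau (sig i) (u i) (v i).

Definition nvs_smul (F : NearField) (I : Type) (rho : I -> MultAut F)
  (a : F) (u : I -> F) : I -> F := fun i => nf_mul F (rho i a) (u i).

(* eta is a monoid automorphism of (F \ {0}, .) (values of eta at 0 are irrelevant) *)
Definition nz_mon_aut (F : NearField) (eta : F -> F) : Prop :=
  (forall a, a <> nf_zero F -> eta a <> nf_zero F) /\
  (forall a b, a <> nf_zero F -> b <> nf_zero F ->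
      eta (nf_mul F a b) = nf_mul F (eta a) (eta b)) /\
  eta (nf_one F) = nf_one F /\
  (forall a b, a <> nf_zero F -> b <> nf_zero F -> eta a = eta b -> a = b) /\
  (forall c, c <> nf_zero F -> exists a, a <> nf_zero F /\ eta a = c).

Definition nvs_iso (F : NearField) (I : Type)
  (sig1 rho1 sig2 rho2 : I -> MultAut F) : Prop :=
  exists (th : (I -> F) -> (I -> F)) (eta : F -> F),
    (forall u : I -> F, fin_supp u -> fin_supp (th u)) /\
    (forall u v : I -> F, fin_supp u -> fin_supp v -> th u = th v -> u = v) /\
    (forall w : I -> F, fin_supp w -> exists u : I -> F, fin_supp u /\ th u = w) /\
    (forall u v : I -> F, fin_supp u -> fin_supp v ->
        th (nvs_add sig1 u v) = nvs_add sig2 (th u) (th v)) /\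
    @nz_mon_aut F eta /\
    (forall (a : F) (u : I -> F), a <> nf_zero F -> fin_supp u ->
        th (nvs_smul rho1 a u) = nvs_smul rho2 (eta a) (th u)).

(* Main.v *)
Require Import Defs.
From Stdlib Require Import List Classical FunctionalExtensionality.
Set Implicit Arguments.

Lemma mul0r_ (F : NearField) (a : F) : nf_mul F a (nf_zero F) = nf_zero F.
Proof.
  assert (H : nf_mul F a (nf_zero F) = nf_add F (nf_mul F a (nf_zero F)) (nf_mul F a (nf_zero F))).
  { rewrite <- nf_distl. rewrite nf_add0l. reflexivity. }
  set (x := nf_mul F a (nf_zero F)) in *.
  assert (H2 : nf_add F (nf_opp F x) x = nf_add F (nf_opp F x) (nf_add F x x)) by (rewrite <- H; reflexivity).
  rewrite nf_addA, nf_addNl, nf_add0l in H2. symmetry; exact H2.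
Qed.

Lemma mul0l_ (F : NearField) (b : F) : nf_mul F (nf_zero F) b = nf_zero F.
Proof.
  destruct (classic (b = nf_zero F)) as [Hb|Hb].
  { subst b. apply mul0r_. }
  destruct (nf_invex F Hb) as [c [Hc [H1 H2]]].
  apply NNPP; intro Hw.
  apply (@nf_mul_neq0 F _ c Hw Hc).
  rewrite <- nf_mulA, H1, nf_mul1r. reflexivity.
Qed.

Lemma ma0 (F : NearField) (t : MultAut F) : t (nf_zero F) = nf_zero F.
Proof.
  rewrite <- (@mul0r_ F (ma_inv t (nf_zero F))) at 1.
  rewrite ma_mul, ma_funK. apply mul0l_.
Qed.

Lemma mainv0 (F : NearField) (t : MultAut F) : ma_inv t (nf_zero F) = nf_zero F.
Proof. rewrite <- (ma0 t) at 1. apply ma_invK. Qed.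

Lemma mainv_mul (F : NearField) (t : MultAut F) a b :
  ma_inv t (nf_mul F a b) = nf_mul F (ma_inv t a) (ma_inv t b).
Proof.
  rewrite <- (ma_funK t a) at 1. rewrite <- (ma_funK t b) at 1.
  rewrite <- ma_mul. apply ma_invK.
Qed.

Lemma fs_map (F : NearField) (I : Type) (f : I -> F -> F) (u : I -> F) :
  (forall i, f i (nf_zero F) = nf_zero F) -> fin_supp u -> fin_supp (fun i => f i (u i)).
Proof.
  intros Hf [s Hs]. exists s. intros i Hi. apply Hs. intro E. apply Hi. rewrite E. apply Hf.
Qed.

Lemma nz_id (F : NearField) : @nz_mon_aut F (fun a : F => a).
Proof.
  repeat split; auto. intros c Hc; exists c; auto.
Qed.

Theorem lemma3p14 (F : NearField) (I : Type) (sig rho : I -> MultAut F) :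
  nvs_iso sig rho (fun i => ma_comp (sig i) (rho i)) (fun _ => ma_id F) /\
  nvs_iso sig rho (fun _ => ma_id F) (fun i => ma_comp (sig i) (rho i)).
Proof.
  split.
  - exists (fun u i => ma_inv (rho i) (u i)), (fun a => a).
    split; [|split; [|split; [|split; [|split]]]].
    + intros u Hu. apply (@fs_map F I (fun i => ma_inv (rho i))); auto. intro; apply mainv0.
    + intros u v _ _ E. extensionality i.
      rewrite <- (ma_funK (rho i) (u i)), <- (ma_funK (rho i) (v i)).
      apply (f_equal (fun g => g i)) in E. simpl in E. rewrite E. reflexivity.
    + intros w Hw. exists (fun i => rho i (w i)). split.
      * apply (@fs_map F I (fun i => rho i)); auto. intro; apply ma0.
      * extensionality i. apply ma_invK.
    + intros u v _ _. extensionality i. unfold nvs_add, add_tau. simpl.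
      rewrite !ma_funK. reflexivity.
    + apply nz_id.
    + intros a u _ _. extensionality i. unfold nvs_smul. simpl.
      rewrite mainv_mul, ma_invK. reflexivity.
  - exists (fun u i => sig i (u i)), (fun a => a).
    split; [|split; [|split; [|split; [|split]]]].
    + intros u Hu. apply (@fs_map F I (fun i => sig i)); auto. intro; apply ma0.
    + intros u v _ _ E. extensionality i.
      rewrite <- (ma_invK (sig i) (u i)), <- (ma_invK (sig i) (v i)).
      apply (f_equal (fun g => g i)) in E. simpl in E. rewrite E. reflexivity.
    + intros w Hw. exists (fun i => ma_inv (sig i) (w i)). split.
      * apply (@fs_map F I (fun i => ma_inv (sig i))); auto. intro; apply mainv0.
      * extensionality i. apply ma_funK.
    + intros u v _ _. extensionality i. unfold nvs_add, add_tau. simpl.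
      rewrite !ma_funK. reflexivity.
    + apply nz_id.
    + intros a u _ _. extensionality i. unfold nvs_smul. simpl.
      rewrite ma_mul. reflexivity.
Qed.
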